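(* Let $\mathcal{X}$ be a compact subset and $\mathcal{Y}$ a finite subset of a metric space $(\mathcal{S},\eta)$. Then every function $f:\mathcal{X}\to\mathcal{Y}$ is $L$-invertible.
   Context: Hausdorff distance: for nonempty subsets $\mathcal{A},\mathcal{B}$ of $(\mathcal{S},\eta)$, $\mathcal{H}(\mathcal{A},\mathcal{B}):=\max\{\sup_{a\in\mathcal{A}}\inf_{b\in\mathcal{B}}\eta(a,b),\sup_{b\in\mathcal{B}}\inf_{a\in\mathcal{A}}\eta(a,b)\}$. A function $f:\mathcal{X}\to\mathcal{Y}$ is $L$-invertible if there is a constant $L_{f^{-1}}\ge0$ such that $\mathcal{H}(f^{-1}(y^1),f^{-1}(y^2))\le L_{f^{-1}}\,\eta(y^1,y^2)$ for all $y^1,y^2\in f(\mathcal{X})$, where $f^{-1}(y)=\{x\in\mathcal{X}:f(x)=y\}$. *)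

(* Defs.v *)
From HB Require Import structures.
From mathcomp Require Import all_boot all_order all_algebra.
From mathcomp Require Import all_classical all_reals all_analysis.

Set Implicit Arguments. Unset Strict Implicit. Unset Printing Implicit Defensive.
Import Order.TTheory GRing.Theory Num.Theory.
Local Open Scope classical_set_scope.
Local Open Scope ring_scope.

Definition hausdorff_dist {R : realType} {S : metricType R} (A B : set S) : \bar R :=
  maxe (ereal_sup [set ereal_inf [set (mdist a b)%:E | b in B] | a in A])
       (ereal_sup [set ereal_inf [set (mdist a b)%:E | a in A] | b in B]).

Definition fiber {S : Type} (X : set S) (f : S -> S) (y : S) : set S :=
  [set x | X x /\ f x = y].

Definition L_invertible {R : realType} {S : metricType R} (X : set S) (f : S -> S) : Prop :=
  exists L : R, 0 <= L /\
    forall y1 y2, (f @` X) y1 -> (f @` X) y2 ->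
      (hausdorff_dist (fiber X f y1) (fiber X f y2) <= (L * mdist y1 y2)%:E)%E.

(* Main.v *)
Require Import Defs.
From HB Require Import structures.
From mathcomp Require Import all_boot all_order all_algebra.
From mathcomp Require Import all_classical all_reals all_analysis.
Import Order.TTheory GRing.Theory Num.Theory.
Local Open Scope classical_set_scope.
Local Open Scope ring_scope.

Lemma fin_bound_aux (R : realType) (T : eqType) (s : seq T) (h : T -> R) :
  exists M, 0 <= M /\ forall t, t \in s -> h t <= M.
Proof.
elim: s => [|a s [M [M0 HM]]]; first by exists 0; split.
exists (Num.max (h a) M); split; first by rewrite le_max M0 orbT.
move=> t; rewrite in_cons => /orP[/eqP->|ts]; first by rewrite le_max lexx.
by rewrite le_max HM ?orbT.
Qed.

Lemma haus_le (R : realType) (S : metricType R) (A B : set S) (c : R) :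
  (forall a, A a -> exists2 b, B b & mdist a b <= c) ->
  (forall b, B b -> exists2 a, A a & mdist a b <= c) ->
  (hausdorff_dist A B <= c%:E)%E.
Proof.
move=> HA HB; rewrite /hausdorff_dist ge_max; apply/andP; split;
  apply: ge_ereal_sup => _ [a Aa <-].
  have [b Bb h] := HA a Aa.
  apply: (@le_trans _ _ (mdist a b)%:E); first by apply: ereal_inf_lbound; exists b.
  by rewrite lee_fin.
have [b Bb h] := HB a Aa.
apply: (@le_trans _ _ (mdist b a)%:E); first by apply: ereal_inf_lbound; exists b.
by rewrite lee_fin.
Qed.

Lemma diam_bound (R : realType) (S : metricType R) (X : set S) :
  compact X -> exists D, forall a b, X a -> X b -> mdist a b <= D.
Proof.
move=> hX.
have [[x0 X0]|X0] := pselect (X !=set0); last first.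
  by exists 0 => a b Xa; exfalso; apply: X0; exists a.
have := (compact_near_coveringP X).1 hX R (pinfty_nbhs R)
   (fun r x => mdist x0 x < r) _.
case.
- move=> x Xx.
  exists (ball x 1, [set r | mdist x0 x + 1 < r]).
    split; first exact: nbhsx_ballx.
    by exists (mdist x0 x + 1); split; [exact: num_real|].
  move=> [x' r] [/= bx hr].
  rewrite ballEmdist /= in bx.
  apply: (le_lt_trans (metric_triangle _ x _)).
  apply: lt_trans hr.
  by rewrite ltrD2l.
move=> M [Mr HM].
have := HM (M + 1); rewrite ltrDl ltr01 => /(_ isT) HX.
exists ((M + 1) + (M + 1)) => a b Xa Xb.
apply: (le_trans (metric_triangle _ x0 _)).
rewrite metric_sym lerD // ltW //; exact: HX.
Qed.

Theorem lemma5 (R : realType) (S : metricType R) (X Y : set S)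
  (hX : compact X) (hY : finite_set Y)
  (f : S -> S) (hf : forall x, X x -> Y (f x)) :
  L_invertible X f.
Proof.
have [D HD] := @diam_bound _ _ X hX.
have [s Ys] := (finite_seqP Y).1 hY.
pose ps : seq (S * S)%type := [seq (x, y) | x <- s, y <- s].
have [M [M0 HM]] := @fin_bound_aux R _ ps (fun p : (S * S)%type => D / mdist p.1 p.2).
exists M; split => // y1 y2 [x1 X1 <-] [x2 X2 <-].
have [e|ne] := eqVneq (f x1) (f x2).
  rewrite -e mdistxx mulr0.
  by apply: haus_le => a Aa; exists a => //; rewrite mdistxx.
have d0 : 0 < mdist (f x1) (f x2) by rewrite mdist_gt0.
have hD : D <= M * mdist (f x1) (f x2).
  have s1 : f x1 \in s.
    by have := hf x1 X1; rewrite Ys.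
  have s2 : f x2 \in s.
    by have := hf x2 X2; rewrite Ys.
  have := HM (f x1, f x2) (allpairs_f pair s1 s2).
  by rewrite /= ler_pdivrMr.
apply: haus_le.
  move=> a [Xa _]; exists x2; first by split.
  exact: (le_trans (HD a x2 Xa X2) hD).
move=> b [Xb _]; exists x1; first by split.
exact: (le_trans (HD x1 b X1 Xb) hD).
Qed.
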